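(* If a topological space $X$ is productively countably tight, then $\mathsf{S}_1(\Omega_x, \Omega_x)$ holds for each $x \in X$; that is, for every $x \in X$ and every sequence $(A_n)_{n \in \omega}$ of elements of $\Omega_x$ one can select $a_n \in A_n$ such that $\{a_n : n \in \omega\} \in \Omega_x$.
   Context: For a point $x$ of a space $X$, $\Omega_x$ denotes the collection of all sets $A \subset X$ such that $x \notin A$ and $x \in \overline{A}$. A space is countably tight if for every point $y$ and every set $A$ with $y \in \overline{A}$ there is a countable $B \subset A$ with $y \in \overline{B}$. $X$ is productively countably tight if $X \times Y$ is countably tight for every countably tight space $Y$. *)

(* Defs.v *)
From HB Require Import structures.
From mathcomp Require Import all_boot all_order.
From mathcomp Require Import all_classical all_reals all_analysis.
Set Implicit Arguments. Unset Strict Implicit. Unset Printing Implicit Defensive.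
Local Open Scope classical_set_scope.

Definition Omega (X : topologicalType) (x : X) : set (set X) :=
  [set A | ~ A x /\ closure A x].

Definition countably_tight (X : topologicalType) : Prop :=
  forall (y : X) (A : set X), closure A y ->
    exists B : set X, B `<=` A /\ countable B /\ closure B y.

Definition productively_countably_tight (X : topologicalType) : Prop :=
  forall Y : topologicalType, countably_tight Y -> countably_tight (X * Y)%type.

Definition S1_Omega (X : topologicalType) (x : X) : Prop :=
  forall A : nat -> set X, (forall n, Omega x (A n)) ->
    exists a : nat -> X, (forall n, A n (a n)) /\ Omega x (range a).

(* Main.v *)
Require Import Defs.
From HB Require Import structures.
From mathcomp Require Import all_boot all_order.
From mathcomp Require Import all_classical all_reals all_analysis.
Set Implicit Arguments. Unset Strict Implicit. Unset Printing Implicit Defensive.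
Local Open Scope classical_set_scope.

(* The sequential fan with spines indexed by nat -> nat. *)
Definition fanY := option ((nat -> nat) * nat).
HB.instance Definition _ := Choice.on fanY.

Definition fan_open (U : set fanY) : Prop :=
  U None -> forall b : nat -> nat, exists m, forall k, (m <= k)%N -> U (Some (b, k)).

Lemma fan_openT : fan_open setT.
Proof. by move=> _ b; exists 0%N. Qed.

Lemma fan_openI : setI_closed fan_open.
Proof.
move=> A B oA oB [AN BN] b.
have [m1 H1] := oA AN b; have [m2 H2] := oB BN b.
exists (maxn m1 m2) => k hk; split.
  by apply: H1; apply: leq_trans hk; exact: leq_maxl.
by apply: H2; apply: leq_trans hk; exact: leq_maxr.
Qed.

Lemma fan_openU (I : Type) (f : I -> set fanY) : (forall i, fan_open (f i)) ->
  fan_open (\bigcup_i f i).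
Proof.
move=> H [i _ fiN] b; have [m Hm] := H i fiN b.
by exists m => k hk; exists i => //; apply: Hm.
Qed.

HB.instance Definition _ := isOpenTopological.Build fanY fan_openT fan_openI fan_openU.

Lemma fan_nbhsE (y : fanY) (U : set fanY) :
  nbhs y U <-> exists B, [/\ fan_open B, B y & B `<=` U].
Proof. by []. Qed.

Lemma fan_ct : countably_tight fanY.
Proof.
move=> y A clA.
case: y clA => [p|] clA.
  have [w [Aw wp]] : A `&` [set Some p] !=set0.
    apply: clA; apply/fan_nbhsE; exists [set Some p]; split => //.
  rewrite /= in wp; subst w.
  exists [set Some p]; split; [by move=> z ->|split; [exact: countable1|]].
  exact: subset_closure.
case: (pselect (A None)) => [AN|nAN].
  exists [set None]; split; [by move=> z ->|split; [exact: countable1|]].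
  exact: subset_closure.
case: (pselect (exists b, forall m, exists k, (m <= k)%N /\ A (Some (b,k)))) => [[b Hb]|nH].
  exists [set z | exists k, z = Some (b,k) /\ A z]; split.
    by move=> z [k [_ Az]].
  split.
    apply: (@sub_countable _ _ _ ((fun k => Some (b, k) : fanY) @` [set: nat])).
      apply: subset_card_le => z [k [-> _]]; by exists k.
    apply: card_le_trans (card_image_le _ _) _; exact: countableP.
  move=> W /fan_nbhsE [B [oB BN sBW]]; have [m Hm] := oB BN b.
  have [k [hk Ak]] := Hb m.
  exists (Some (b,k)); split; first by exists k.
  by apply: sBW; apply: Hm.
exfalso.
have H : forall b, exists m, forall k, (m<=k)%N -> ~ A (Some (b,k)).
  move=> b; apply: contrapT => Hn; apply: nH; exists b => m.
  apply: contrapT => Hm; apply: Hn; exists m => k hk Ak; apply: Hm; by exists k.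
have [w [Aw nAw]] : A `&` (~` A) !=set0.
  apply: clA; apply/fan_nbhsE; exists (~` A); split => //.
  by move=> _ b; have [m Hm] := H b; exists m.
exact: nAw.
Qed.

Lemma clos_prod (X Y : topologicalType) (E : set (X * Y)) (x : X) (y : Y) :
  closure E (x, y) <-> forall V U, nbhs x V -> nbhs y U ->
    exists a b, [/\ E (a, b), V a & U b].
Proof.
split.
  move=> cl V U hV hU.
  have [[a b] [Eab [/= Va Ub]]] : E `&` (V `*` U) !=set0.
    by apply: cl; exists (V, U).
  by exists a, b.
move=> H B [[V U] [/= hV hU] sub].
have [a [b [Eab Va Ub]]] := H V U hV hU.
by exists (a, b); split => //; apply: sub.
Qed.

Lemma X_ct (X : topologicalType) : productively_countably_tight X -> countably_tight X.
Proof.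
move=> P y A clA.
have XYct := P fanY fan_ct.
have cl : closure [set p : X * fanY | A p.1 /\ p.2 = None] (y, None : fanY).
  apply/clos_prod => V U hV hU.
  have [a [Aa Va]] := clA V hV.
  exists a, None; split => //; exact: (nbhs_singleton hU).
have [B [sB [cB clB]]] := XYct _ _ cl.
exists (fst @` B); split.
  by move=> a [p /sB [Ap _] <-].
split.
  apply: sub_countable cB; exact: card_image_le.
move=> W hW.
have [a [b [Bab Wa _]]] := (iffLR (clos_prod _ _ _) clB) W setT hW filterT.
by exists a; split => //; exists (a, b).
Qed.

Lemma enum_lemma (X : topologicalType) (x : X) (A : set X) :
  countably_tight X -> Omega x A ->
  exists e : nat -> X, (forall j, A (e j)) /\ closure (range e) x.
Proof.
move=> ct [_ clA].
have [B [sB [cB clB]]] := ct x A clA.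
have [b0 [Bb0 _]] : B `&` setT !=set0 by apply: clB; exact: filterT.
have [f finj] := countable_injP _ cB.
pose e j := match pselect (exists b, B b /\ f b = j) with
  | left h => proj1_sig (cid h) | right _ => b0 end.
have eB : forall j, B (e j).
  move=> j; rewrite /e; case: pselect => [h|//].
  by case: (cid h) => /= b [].
exists e; split; first by move=> j; apply: sB.
move=> W hW.
have [b [Bb Wb]] := clB W hW.
exists b; split => //; exists (f b) => //.
rewrite /e; case: pselect => [h|nh]; last by exfalso; apply: nh; exists b.
case: (cid h) => /= b' [Bb' fb'].
by apply: finj => //; rewrite inE.
Qed.


Theorem corollary2p8 (X : topologicalType) :
  productively_countably_tight X -> forall x : X, S1_Omega x.
Proof.
move=> P x A HA.
have Xct := X_ct P.
have XYct := P fanY fan_ct.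
have [e He] := choice (fun n => enum_lemma Xct (HA n)).
pose lev (b : nat -> nat) k := pickle (mkseq b k).
pose val (b : nat -> nat) k := e (lev b k) (b k).
have valA : forall b k, A (lev b k) (val b k) by move=> b k; exact: (He _).1.
pose D := [set p : X * fanY | exists b k, p = (val b k, Some (b, k))].
have clD : closure D (x, None : fanY).
  apply/clos_prod => V U hV /fan_nbhsE [B [oB BN sBU]].
  have Hg : forall t : seq nat, exists j, V (e (pickle t) j).
    move=> t; have [z [[j _ <-] Vz]] := (He (pickle t)).2 V hV.
    by exists j.
  pose g t := proj1_sig (cid (Hg t)).
  have gV : forall t, V (e (pickle t) (g t)) by move=> t; exact: (proj2_sig (cid (Hg t))).
  pose pre k := iter k (fun t => rcons t (g t)) [::].
  pose b k := g (pre k).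
  have mk : forall k, mkseq b k = pre k.
    elim=> [//|k IH]; by rewrite mkseqS IH /pre iterS.
  have [m Hm] := oB BN b.
  exists (val b m), (Some (b, m)); split.
  - by exists b, m.
  - by rewrite /val /lev mk; exact: gV.
  - by apply: sBU; apply: Hm.
have [E [sED [cE clE]]] := XYct _ _ clD.
pose pr (p : X * fanY) : nat -> nat := if p.2 is Some (b, _) then b else (fun _ => 0%N).
pose S := [set b | exists a k, E (a, Some (b, k))].
have cS : countable S.
  apply: (@sub_countable _ _ _ (pr @` E)); last first.
    apply: card_le_trans (card_image_le _ _) cE.
  apply: subset_card_le => b [a [k Eab]]; by exists (a, Some (b, k)).
have [io ioinj] := countable_injP _ cS.
have ioE : forall b1 b2, S b1 -> S b2 -> io b1 = io b2 -> b1 = b2.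
  by move=> b1 b2 h1 h2 h; apply: ioinj => //; rewrite inE.
pose bad b k := exists b', [/\ S b', (io b' < io b)%N, b' <> b & mkseq b' k = mkseq b k].
have fin : forall b, exists m, forall k, (m <= k)%N -> ~ bad b k.
  move=> b.
  suff H : forall N, exists m, forall k, (m <= k)%N -> forall b', S b' ->
      (io b' < N)%N -> b' <> b -> mkseq b' k <> mkseq b k.
    have [m Hm] := H (io b); exists m => k hk [b' [Sb' lt ne eq]].
    exact: (Hm k hk b' Sb' lt ne eq).
  elim=> [|N [m Hm]]; first by exists 0%N.
  case: (pselect (exists b0, [/\ S b0, io b0 = N & b0 <> b])) => [[b0 [Sb0 iob0 nb0]]|nex].
    have [j hj] : exists j, b0 j <> b j.
      apply: contrapT => nj; apply: nb0; apply: funext => j.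
      by apply: contrapT => h; apply: nj; exists j.
    exists (maxn m j.+1) => k hk b' Sb' lt ne eq.
    move: lt; rewrite ltnS leq_eqVlt => /orP [/eqP iob'|lt].
      have eb : b' = b0 by apply: ioE => //; rewrite iob'.
      subst b'.
      have jk : (j < k)%N by apply: leq_trans hk; exact: leq_maxr.
      apply: hj.
      by rewrite -(nth_mkseq 0%N b0 jk) -(nth_mkseq 0%N b jk) eq.
    apply: (Hm k _ b' Sb' lt ne eq); apply: leq_trans hk; exact: leq_maxl.
  exists m => k hk b' Sb' lt ne eq.
  move: lt; rewrite ltnS leq_eqVlt => /orP [/eqP iob'|lt].
    by apply: nex; exists b'.
  exact: (Hm k hk b' Sb' lt ne eq).
have uniq : forall b1 k1 b2 k2, S b1 -> ~ bad b1 k1 -> S b2 -> ~ bad b2 k2 ->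
    lev b1 k1 = lev b2 k2 -> b1 = b2 /\ k1 = k2.
  move=> b1 k1 b2 k2 S1 nb1 S2 nb2 hl.
  have hm : mkseq b1 k1 = mkseq b2 k2 by apply: (pcan_inj pickleK).
  have hk : k1 = k2 by rewrite -(size_mkseq b1 k1) hm size_mkseq.
  subst k2; split => //.
  apply: contrapT => ne.
  have nio : io b1 <> io b2 by move=> h; apply: ne; exact: ioE.
  case: (ltngtP (io b1) (io b2)) => [lt|lt|eqi]; last by [].
  - by apply: nb2; exists b1; split => //.
  - by apply: nb1; exists b2; split => //; apply/nesym.
pose sel n := match pselect (exists bk : (nat -> nat) * nat,
      [/\ S bk.1, ~ bad bk.1 bk.2 & lev bk.1 bk.2 = n]) with
  | left h => val (proj1_sig (cid h)).1 (proj1_sig (cid h)).2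
  | right _ => e n 0%N end.
have selA : forall n, A n (sel n).
  move=> n; rewrite /sel; case: pselect => [h|_]; last exact: (He n).1.
  case: (cid h) => [[b k] /= [_ _ <-]]; exact: valA.
have selv : forall b k, S b -> ~ bad b k -> sel (lev b k) = val b k.
  move=> b k Sb nb; rewrite /sel; case: pselect => [h|nh]; last first.
    by exfalso; apply: nh; exists (b, k).
  case: (cid h) => [[b' k'] /= [Sb' nb' hl]].
  by have [-> ->] := uniq _ _ _ _ Sb' nb' Sb nb hl.
exists sel; split => //; split.
  by move=> [n _ hn]; apply: (HA n).1; rewrite -hn.
move=> W hW.
pose U := [set y : fanY | forall b k, y = Some (b, k) -> S b -> ~ bad b k].
have hU : nbhs (None : fanY) U.
  apply/fan_nbhsE; exists U; split => //.
  move=> _ b; case: (pselect (S b)) => [Sb|nSb].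
    have [m Hm] := fin b; exists m => k hk b' k' [<- <-] _; exact: Hm.
  by exists 0%N => k _ b' k' [<- _].
have [a [y [Eay Wa Uy]]] := (iffLR (clos_prod _ _ _) clE) W U hW hU.
have [b [k hbk]] := sED _ Eay.
case: hbk => ha hy; subst a y.
have Sb : S b by exists (val b k), k.
have nb : ~ bad b k by apply: (Uy b k).
exists (val b k); split => //; exists (lev b k) => //; exact: selv.
Qed.
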